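(* Let $n\ge1$ and $B=(v_1,\dots,v_n)\in\mathrm{GL}_n(\mathbb{R})$. Define linear maps $L^\Phi_B: M_n(\mathbb{R})^2\to\mathcal{S}^2(\mathbb{R}^n)^n$ and $L^\Psi_B:\mathcal{S}^2(\mathbb{R}^n)^n\to\mathcal{S}^3(\mathbb{R}^n)^{n(n-1)/2}$ by $$L^\Phi_B(A',B')=\big(A'\circ Q_{v_i}-Q_{v_i}\circ(A',I)-Q_{v_i}\circ(I,A')+Q_{\omega_i}\big)_{1\le i\le n},$$ where $B'=(\omega_1,\dots,\omega_n)$ (columns), and $$L^\Psi_B(q_1,\dots,q_n)=\big([q_i,Q_{v_j}]-[q_j,Q_{v_i}]\big)_{1\le i<j\le n}.$$ Then $\ker L^\Psi_B=\operatorname{Im}L^\Phi_B$.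
   Context: $\mathcal{S}^r(\mathbb{R}^n)$ denotes the space of symmetric $r$-linear maps $(\mathbb{R}^n)^r\to\mathbb{R}^n$. $\langle\cdot,\cdot\rangle$ is the Euclidean inner product. For $v\in\mathbb{R}^n$, $Q_v\in\mathcal{S}^2(\mathbb{R}^n)$ is $Q_v(\xi,\eta)=\langle\xi,\eta\rangle v-\langle\xi,v\rangle\eta-\langle\eta,v\rangle\xi$. For $Q\in\mathcal{S}^2(\mathbb{R}^n)$ and $A,C\in M_n(\mathbb{R})$, $Q\circ(A,C)(\xi,\eta)=Q(A\xi,C\eta)$ and $A\circ Q(\xi,\eta)=A(Q(\xi,\eta))$. For $Q,Q'\in\mathcal{S}^2(\mathbb{R}^n)$, $[Q,Q']\in\mathcal{S}^3(\mathbb{R}^n)$ is $[Q,Q'](\xi,\eta,\theta)=\{Q(\xi,Q'(\eta,\theta))+Q(\eta,Q'(\theta,\xi))+Q(\theta,Q'(\xi,\eta))\}-\{Q'(\xi,Q(\eta,\theta))+Q'(\eta,Q(\theta,\xi))+Q'(\theta,Q(\xi,\eta))\}$. *)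

(* Defs.v *)
From HB Require Import structures.
From mathcomp Require Import all_boot all_order all_algebra.
From mathcomp Require Import reals.
Set Implicit Arguments. Unset Strict Implicit. Unset Printing Implicit Defensive.
Import Order.TTheory GRing.Theory Num.Theory.
Local Open Scope ring_scope.

Section Defs.
Variables (R : realType) (n : nat).
Notation vec := 'cV[R]_n.

(* a (not necessarily symmetric) map (R^n)^2 -> R^n; elements of S^2 satisfy is_sym2 *)
Definition map2 := vec -> vec -> vec.
Definition map3 := vec -> vec -> vec -> vec.

Definition is_sym2 (Q : map2) : Prop :=
  (forall x y, Q x y = Q y x) /\
  (forall (a : R) x y z, Q (a *: x + y) z = a *: Q x z + Q y z).

Definition dot (x y : vec) : R := \sum_(k < n) x k 0 * y k 0.

Definition Qv (v : vec) : map2 :=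
  fun xi eta => dot xi eta *: v - dot xi v *: eta - dot eta v *: xi.

Definition precomp (Q : map2) (A C : 'M[R]_n) : map2 :=
  fun xi eta => Q (A *m xi) (C *m eta).
Definition postcomp (A : 'M[R]_n) (Q : map2) : map2 :=
  fun xi eta => A *m Q xi eta.

Definition bracket (Q Q' : map2) : map3 :=
  fun xi eta th =>
    (Q xi (Q' eta th) + Q eta (Q' th xi) + Q th (Q' xi eta))
  - (Q' xi (Q eta th) + Q' eta (Q th xi) + Q' th (Q xi eta)).

Definition LPhi (B A' B' : 'M[R]_n) : 'I_n -> map2 :=
  fun i => fun xi eta =>
    postcomp A' (Qv (col i B)) xi eta
    - precomp (Qv (col i B)) A' 1%:M xi eta
    - precomp (Qv (col i B)) 1%:M A' xi eta
    + Qv (col i B') xi eta.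

(* L^Psi_B (q_1..q_n) : component indexed by the pair (i, j), used for i < j *)
Definition LPsi (B : 'M[R]_n) (q : 'I_n -> map2) (i j : 'I_n) : map3 :=
  fun xi eta th =>
    bracket (q i) (Qv (col j B)) xi eta th - bracket (q j) (Qv (col i B)) xi eta th.

End Defs.

(* Main.v *)
Require Import Defs.
From HB Require Import structures.
From mathcomp Require Import all_boot all_order all_algebra.
From mathcomp Require Import reals.
From mathcomp Require Import ring.
From Stdlib Require Import FunctionalExtensionality.
Import Order.TTheory GRing.Theory Num.Theory.
Local Open Scope ring_scope.

Set Implicit Arguments. Unset Strict Implicit. Unset Printing Implicit Defensive.

Module Scal.
Section Scal.
Variables (R : realFieldType) (n : nat).
Notation I := ('I_n).
Definition dl (i j : I) : R := (i == j)%:R.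
Lemma dlC i j : dl i j = dl j i. Proof. by rewrite /dl eq_sym. Qed.
Lemma dll i : dl i i = 1. Proof. by rewrite /dl eqxx. Qed.
Lemma sum_dl_l (j : I) (F : I -> R) : \sum_k dl k j * F k = F j.
Proof.
rewrite (bigD1 j) //= dll mul1r big1 ?addr0 // => k /negbTE kj.
by rewrite /dl kj mul0r.
Qed.
Lemma sum_dl_r (j : I) (F : I -> R) : \sum_k dl j k * F k = F j.
Proof. by under eq_bigr do rewrite dlC; apply: sum_dl_l. Qed.
Lemma sum_dll (F : I -> R) : \sum_k dl k k * F k = \sum_k F k.
Proof. by apply: eq_bigr => k _; rewrite dll mul1r. Qed.

Lemma sum_ldl (j : I) (F : I -> R) : \sum_k F k * dl k j = F j.
Proof. by under eq_bigr do rewrite mulrC; apply: sum_dl_l. Qed.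
Lemma sum_ldr (j : I) (F : I -> R) : \sum_k F k * dl j k = F j.
Proof. by under eq_bigr do rewrite mulrC; apply: sum_dl_r. Qed.
Lemma sum_dlkk : \sum_(k < n) dl k k = n%:R.
Proof. by under eq_bigr do rewrite dll; rewrite sumr_const card_ord. Qed.

Definition tens := I -> I -> I -> I -> R.
Definition S (t : tens) m x y a b c :=
 dl b c * t m x a y + dl c a * t m x b y + dl a b * t m x c y
 - dl a y * t m x b c - dl b y * t m x c a - dl c y * t m x a b
 - dl m y * (t a x b c + t b x c a + t c x a b)
 + dl m a * t y x b c + dl m b * t y x c a + dl m c * t y x a b.
Definition cc (t : tens) x b := \sum_k t k x k b.

Lemma K1 t (Hs : forall m x a b, t m x a b = t m x b a) x y b c : \sum_k S t k x y k b c =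
  dl b c * cc t x y - dl b y * cc t x c - dl c y * cc t x b + n%:R * t y x b c.
Proof.
rewrite /S /cc.
rewrite !big_split /= !sumrN.
rewrite !sum_dl_l !sum_dl_r sum_dll -!mulr_sumr sumr_const card_ord.
under [X in dl b y * X]eq_bigr do rewrite Hs.
rewrite (Hs c x y b) (Hs y x c b) -mulr_natl; ring.
Qed.

Definition tau (t : tens) m x := \sum_k t m x k k.
Definition ff (t : tens) a b := \sum_k t k k a b.

Lemma K2 t (Hs : forall m x a b, t m x a b = t m x b a) m x y a :
  \sum_k S t m x y a k k = n%:R * t m x a y - dl a y * tau t m x
   - dl m y * (tau t a x + 2%:R * cc t x a) + dl m a * tau t y x + 2%:R * t y x m a.
Proof.
rewrite /S /cc /tau.
rewrite !big_split /= !sumrN.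
rewrite ?sum_dl_l ?sum_dl_r ?sum_dll -?mulr_sumr ?sumr_const ?card_ord ?big_split /=.

under [\sum_(i < n) t i x a i]eq_bigr do rewrite (Hs _ _ a).
rewrite (Hs m x y a) (Hs y x a m) -mulr_natl; ring.
Qed.

Lemma K3a t (Hs : forall m x a b, t m x a b = t m x b a) x a b c :
  \sum_k S t k x k a b c = dl b c * cc t x a + dl c a * cc t x b + dl a b * cc t x c
   - n%:R * (t a x b c + t b x c a + t c x a b).
Proof.
rewrite /S /cc.
rewrite !big_split /= !sumrN.
rewrite ?sum_dl_l ?sum_dl_r ?sum_dll -?mulr_sumr ?sumr_const ?card_ord ?big_split /=.

under [\sum_(i < n) t i x a i]eq_bigr do rewrite (Hs _ _ a).
under [\sum_(i < n) t i x b i]eq_bigr do rewrite (Hs _ _ b).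
under [\sum_(i < n) t i x c i]eq_bigr do rewrite (Hs _ _ c).
rewrite -mulr_natl; ring.
Qed.

Lemma K3b t (Hs : forall m x a b, t m x a b = t m x b a) x a b c :
  \sum_k S t k k x a b c = dl b c * ff t a x + dl c a * ff t b x + dl a b * ff t c x
   - dl a x * ff t b c - dl b x * ff t c a - dl c x * ff t a b
   - (t a x b c + t b x c a + t c x a b) + t x a b c + t x b c a + t x c a b.
Proof.
rewrite /S /ff.
rewrite !big_split /= !sumrN.
rewrite ?sum_dl_l ?sum_dl_r ?sum_dll -?mulr_sumr ?sumr_const ?card_ord ?big_split /=.

by [].
Qed.

Definition Cond (t : tens) := forall m x y a b c, S t m x y a b c = S t m y x a b c.
Definition Symt (t : tens) := forall m x a b, t m x a b = t m x b a.

Definition G t m x y a := n%:R * t m x a y - dl a y * tau t m x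
   - dl m y * (tau t a x + 2%:R * cc t x a) + dl m a * tau t y x + 2%:R * t y x m a.

Lemma Gsym t : Symt t -> Cond t -> forall m x y a, G t m x y a = G t m y x a.
Proof.
move=> Hs Hc m x y a; rewrite /G -!K2 //.
by apply: eq_bigr => k _; apply: Hc.
Qed.

Lemma K1sym t : Symt t -> Cond t -> forall x y b c,
  dl b c * cc t x y - dl b y * cc t x c - dl c y * cc t x b + n%:R * t y x b c =
  dl b c * cc t y x - dl b x * cc t y c - dl c x * cc t y b + n%:R * t x y b c.
Proof.
move=> Hs Hc x y b c; rewrite -!K1 //.
by apply: eq_bigr => k _; apply: Hc.
Qed.

Lemma K3sym t : Symt t -> Cond t -> forall x a b c,
  dl b c * cc t x a + dl c a * cc t x b + dl a b * cc t x c
   - n%:R * (t a x b c + t b x c a + t c x a b) =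
  dl b c * ff t a x + dl c a * ff t b x + dl a b * ff t c x
   - dl a x * ff t b c - dl b x * ff t c a - dl c x * ff t a b
   - (t a x b c + t b x c a + t c x a b) + t x a b c + t x b c a + t x c a b.
Proof.
move=> Hs Hc x a b c; rewrite -K3a // -K3b //.
by apply: eq_bigr => k _; apply: Hc.
Qed.

Lemma nR_neq0 : (0 < n)%N -> (n%:R : R) != 0.
Proof. by move=> n0; rewrite pnatr_eq0 -lt0n. Qed.

Lemma core t : (0 < n)%N -> Symt t -> Cond t ->
  (forall x b, cc t x b = 0) -> (forall m x, tau t m x = 0) ->
  forall m x a b, t m x a b = 0.
Proof.
move=> n0 Hs Hc Hcc Htau.
have nz := nR_neq0 n0.
have E2 : forall x y b c, t y x b c = t x y b c.
  move=> x y b c; have := K1sym Hs Hc x y b c.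
  by rewrite !Hcc !mulr0 !subr0 ?add0r => /(mulfI nz).
have E1 : forall m x a y, t m x a y = t m y a x.
  move=> m x a y; have := Gsym Hs Hc m x y a; rewrite /G !Htau !Hcc.
  by rewrite (E2 x y m a) !mulr0 !subr0 ?addr0 ?add0r !mulr0 !subr0 => /addIr /(mulfI nz).
have Hff : forall a b, ff t a b = tau t b a.
  move=> a b; rewrite /ff /tau; apply: eq_bigr => k _.
  by rewrite (E1 k k a b) Hs E2 (E1 b k k a).
move=> m x a b; have Hff0 : forall a b, ff t a b = 0 by move=> ? ?; rewrite Hff Htau.
have := K3sym Hs Hc m x a b; rewrite !Hff0 !Hcc !mulr0 !subr0 !addr0 !add0r.
have -> : t x m a b = t m x a b by rewrite E2.
have -> : t a m b x = t m x a b by rewrite E2 (E1 m a b x) Hs.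
have -> : t b m x a = t m x a b by rewrite E2 Hs (E1 m b a x).
have -> : t m a b x = t m x a b by rewrite (E1 m a b x) Hs.
have -> : t m b x a = t m x a b by rewrite Hs (E1 m b a x).
move=> h.
have : - (n%:R * (t m x a b + t m x a b + t m x a b)) = 0 by rewrite h; ring.
have -> : - (n%:R * (t m x a b + t m x a b + t m x a b)) = (3 * n)%:R * t m x a b * (-1).
  by rewrite natrM; ring.
move/eqP; rewrite !mulf_eq0 oppr_eq0 oner_eq0 orbF => /orP [|/eqP //].
by rewrite pnatr_eq0 muln_eq0 /=; case: n n0.
Qed.

Lemma T1 t : Symt t -> Cond t -> forall x y,
  (n%:R - 2%:R) * cc t x y + n%:R * tau t y x = (n%:R - 2%:R) * cc t y x + n%:R * tau t x y.
Proof.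
move=> Hs Hc x y.
have key : forall x y, \sum_k G t k x y k = (n%:R - 2%:R) * cc t x y + n%:R * tau t y x.
  move=> {}x {}y; rewrite /G.
  rewrite !big_split /= !sumrN.
  rewrite ?sum_dl_l ?sum_dl_r ?sum_dll -?mulr_sumr ?sumr_const ?card_ord ?big_split /=.
  by rewrite -/(cc t x y) -/(tau t y x) -mulr_natl; ring.
rewrite -!key; apply: eq_bigr => k _; exact: Gsym.
Qed.

Lemma eq0_of (a b c : R) : a = b -> c = b - a -> c = 0.
Proof. by move=> -> ->; rewrite subrr. Qed.

Lemma T2 t : Symt t -> Cond t ->
  n%:R * \sum_m tau t m m + (n%:R - 2%:R) * \sum_x cc t x x = 0.
Proof.
move=> Hs Hc.
have H : \sum_x \sum_k G t k x k x = \sum_x \sum_k G t k k x x.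
  by apply: eq_bigr => x _; apply: eq_bigr => k _; exact: Gsym.
have L : forall x, \sum_k G t k x k x = (2%:R - n%:R) * cc t x x - n%:R * tau t x x.
  move=> x; rewrite /G.
  rewrite !big_split /= !sumrN.
  rewrite ?sum_dl_l ?sum_dl_r ?sum_dll -?mulr_sumr ?sumr_const ?card_ord ?big_split /=.
  under [\sum_(i < n) t i x x i]eq_bigr do rewrite (Hs _ _ x).
  by rewrite -/(cc t x x) -mulr_natr; ring.
have L2 : forall x, \sum_k G t k k x x = n%:R * ff t x x - \sum_i tau t i i
    - 2%:R * cc t x x + 2%:R * \sum_i t x i x i.
  move=> x; rewrite /G.
  rewrite !big_split /= !sumrN.
  rewrite ?sum_dl_l ?sum_dl_r ?sum_dll -?mulr_sumr ?sumr_const ?card_ord ?big_split /=.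
  under [\sum_(i < n) t x i i x]eq_bigr do rewrite Hs.
  rewrite dll -/(ff t x x) mul1r; ring.
have E1 : \sum_x ff t x x = \sum_m tau t m m.
  by rewrite /ff /tau exchange_big.
have E2 : \sum_x \sum_i t x i x i = \sum_x cc t x x.
  by rewrite /cc exchange_big.
move: H; under eq_bigr do rewrite L; under [in RHS]eq_bigr do rewrite L2.
rewrite !big_split /= !sumrN -!mulr_sumr sumr_const card_ord E1 E2 => H.
apply: (eq0_of H); rewrite -mulr_natr; ring.
Qed.

Lemma S_sub (t1 t2 : tens) m x y a b c :
  S (fun m x a b => t1 m x a b - t2 m x a b) m x y a b c = S t1 m x y a b c - S t2 m x y a b c.
Proof. rewrite /S; ring. Qed.

Definition phi (A W : 'M[R]_n) : tens := fun m x a b =>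
  dl a b * A m x - (A a b + A b a) * dl m x + A x a * dl m b + A x b * dl m a
  + dl a b * W m x - W a x * dl m b - W b x * dl m a.

Lemma phi_sym A W : Symt (phi A W).
Proof. by move=> m x a b; rewrite /phi (dlC a b); ring. Qed.

Lemma cc_phi A W x b : cc (phi A W) x b = n%:R * (A x b - W b x).
Proof.
rewrite /cc /phi.
rewrite !big_split /= !sumrN.
rewrite ?sum_dl_l ?sum_dl_r ?sum_ldl ?sum_ldr ?sum_dlkk -?mulr_suml ?big_split /=.
by rewrite -?mulr_sumr ?sum_dlkk; ring.
Qed.

Lemma tau_phi A W m x : tau (phi A W) m x =
  n%:R * A m x - 2%:R * (\sum_k A k k) * dl m x + 2%:R * A x m + (n%:R - 2%:R) * W m x.
Proof.
rewrite /tau /phi.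
rewrite !big_split /= !sumrN.
rewrite ?sum_dl_l ?sum_dl_r ?sum_ldl ?sum_ldr ?sum_dlkk -?mulr_suml ?big_split /=.
by rewrite -?mulr_sumr ?sum_dlkk; ring.
Qed.

Lemma construct t : (0 < n)%N -> Symt t -> Cond t -> (forall A W, Cond (phi A W)) ->
  exists A W : 'M[R]_n, forall m x a b, t m x a b = phi A W m x a b.
Proof.
move=> n0 Hs Hc Hphi.
have nz := nR_neq0 n0.
pose Rm m x := tau t m x + (n%:R - 2%:R) / n%:R * cc t x m.
pose A := \matrix_(m, x) (Rm m x / (2%:R * n%:R)).
pose W := \matrix_(b, x) (A x b - cc t x b / n%:R).
have RmS : forall m x, Rm m x = Rm x m.
  move=> m x; rewrite /Rm; apply: (mulfI nz).
  have e : forall u v : R, n%:R * (u + (n%:R - 2%:R) / n%:R * v) = (n%:R - 2%:R) * v + n%:R * u.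
    by move=> u v; field.
  by rewrite !e; apply: T1.
have trR : \sum_k Rm k k = 0.
  rewrite /Rm big_split /= -mulr_sumr.
  have := T2 Hs Hc => h.
  have e : forall u v : R, u + (n%:R - 2%:R) / n%:R * v = (n%:R * u + (n%:R - 2%:R) * v) / n%:R.
    by move=> u v; field.
  by rewrite e h mul0r.
have trA : \sum_k A k k = 0.
  under eq_bigr do rewrite mxE; by rewrite -mulr_suml trR mul0r.
exists A, W => m x a b; apply/eqP; rewrite -subr_eq0; apply/eqP.
pose D : tens := fun m x a b => t m x a b - phi A W m x a b.
change (D m x a b = 0); apply: core => //.
- by move=> ? ? ? ?; rewrite /D Hs phi_sym.
- by move=> ? ? ? ? ? ?; rewrite /D S_sub [RHS]S_sub Hc (Hphi A W).
- move=> x' b'; rewrite /cc /D sumrB -/(cc t x' b') -/(cc (phi A W) x' b') cc_phi !mxE.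
  rewrite opprB addrCA subrr addr0 mulrCA mulfV // mulr1; exact: subrr.
- move=> m' x'; rewrite /tau /D sumrB -/(tau t m' x') -/(tau (phi A W) m' x') tau_phi trA !mxE.
  rewrite (RmS x' m') /Rm /=; field.
  by [].
Qed.
End Scal.

End Scal.
Import Scal.

Section V.
Variables (R : realType) (n : nat).
Notation vec := 'cV[R]_n.
Notation dl := (@dl R n).
Definition e (k : 'I_n) : vec := locked (delta_mx k 0).

Lemma dotC (x y : vec) : dot x y = dot y x.
Proof. by apply: eq_bigr => k _; rewrite mulrC. Qed.
Lemma dotDl (x y z : vec) : dot (x + y) z = dot x z + dot y z.
Proof. by rewrite /dot -big_split; apply: eq_bigr => k _; rewrite !mxE mulrDl. Qed.
Lemma dotZl a (x z : vec) : dot (a *: x) z = a * dot x z.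
Proof. by rewrite /dot mulr_sumr; apply: eq_bigr => k _; rewrite !mxE mulrA. Qed.
Lemma dotNl (x z : vec) : dot (- x) z = - dot x z.
Proof. by rewrite /dot -sumrN; apply: eq_bigr => k _; rewrite !mxE mulNr. Qed.
Lemma dotBl (x y z : vec) : dot (x - y) z = dot x z - dot y z.
Proof. by rewrite dotDl dotNl. Qed.
Lemma dotDr (x y z : vec) : dot z (x + y) = dot z x + dot z y.
Proof. by rewrite !(dotC z) dotDl. Qed.
Lemma dotZr a (x z : vec) : dot z (a *: x) = a * dot z x.
Proof. by rewrite !(dotC z) dotZl. Qed.
Lemma dotNr (x z : vec) : dot z (- x) = - dot z x.
Proof. by rewrite !(dotC z) dotNl. Qed.
Lemma dotBr (x y z : vec) : dot z (x - y) = dot z x - dot z y.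
Proof. by rewrite dotDr dotNr. Qed.

Lemma e_entry (a m : 'I_n) : e a m 0 = dl m a.
Proof. by rewrite /e -lock mxE eqxx andbT /Scal.dl eq_sym. Qed.
Lemma dot_el a (x : vec) : dot (e a) x = x a 0.
Proof.
rewrite /dot (bigD1 a) //= e_entry dll mul1r big1 ?addr0 // => k ka.
by rewrite e_entry /Scal.dl (negbTE ka) mul0r.
Qed.
Lemma dot_er a (x : vec) : dot x (e a) = x a 0.
Proof. by rewrite dotC dot_el. Qed.
Lemma dot_ee a b : dot (e a) (e b) = dl a b.
Proof. by rewrite dot_el e_entry dlC. Qed.

Section Bil.
Variable Q : map2 R n.
Hypothesis HQ : is_sym2 Q.
Lemma QC x y : Q x y = Q y x. Proof. by case: HQ. Qed.
Lemma QDl x y z : Q (x + y) z = Q x z + Q y z.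
Proof. by case: HQ => _ h; rewrite -{1}[x]scale1r h scale1r. Qed.
Lemma Q0l z : Q 0 z = 0.
Proof. by apply: (@addrI _ (Q 0 z)); rewrite -QDl !addr0. Qed.
Lemma QZl a x z : Q (a *: x) z = a *: Q x z.
Proof. by case: HQ => _ h; rewrite -[a *: x]addr0 h Q0l addr0. Qed.
Lemma QNl x z : Q (- x) z = - Q x z.
Proof. by rewrite -scaleN1r QZl scaleN1r. Qed.
Lemma QBl x y z : Q (x - y) z = Q x z - Q y z.
Proof. by rewrite QDl QNl. Qed.
Lemma QDr x y z : Q z (x + y) = Q z x + Q z y.
Proof. by rewrite !(QC z) QDl. Qed.
Lemma QZr a x z : Q z (a *: x) = a *: Q z x.
Proof. by rewrite !(QC z) QZl. Qed.
Lemma QNr x z : Q z (- x) = - Q z x.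
Proof. by rewrite !(QC z) QNl. Qed.
Lemma QBr x y z : Q z (x - y) = Q z x - Q z y.
Proof. by rewrite !(QC z) QBl. Qed.
End Bil.

Lemma Qv_sym (v : vec) : is_sym2 (Qv v).
Proof.
split=> [x y|a x y z]; rewrite /Qv.
  by rewrite dotC; apply/matrixP => i j; rewrite !mxE; ring.
rewrite dotDl dotZl dotDl dotZl; apply/matrixP => i j; rewrite !mxE; ring.
Qed.

Lemma QvDv (v w x y : vec) : Qv (v + w) x y = Qv v x y + Qv w x y.
Proof. rewrite /Qv !dotDr; apply/matrixP => i j; rewrite !mxE; ring. Qed.
Lemma QvZv a (v x y : vec) : Qv (a *: v) x y = a *: Qv v x y.
Proof. rewrite /Qv !dotZr; apply/matrixP => i j; rewrite !mxE; ring. Qed.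
Lemma Qv0v (x y : vec) : Qv 0 x y = 0.
Proof. by have := QvZv 0 0 x y; rewrite !scale0r. Qed.
Lemma Qv_sum (I : finType) (c : I -> R) (v : I -> vec) x y :
  Qv (\sum_j c j *: v j) x y = \sum_j c j *: Qv (v j) x y.
Proof.
apply: (big_ind2 (fun a b => Qv a x y = b)) => [|a1 b1 a2 b2 <- <-|j _].
- exact: Qv0v.
- exact: QvDv.
- exact: QvZv.
Qed.

Ltac gen_dots := repeat match goal with |- context [dot ?u ?v] =>
  try rewrite [dot v u](dotC v u); generalize (dot u v); intro end.
Ltac push_dots := rewrite ?(dotDr, dotBr, dotZr, dotNr, dotDl, dotBl, dotZl, dotNl).

Lemma QQ0 (a b x y z : vec) : bracket (Qv a) (Qv b) x y z = 0.
Proof.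
rewrite /bracket /Qv; push_dots; gen_dots.
apply/matrixP => i j; rewrite !mxE; ring.
Qed.

Definition DA (A : 'M[R]_n) (Q : map2 R n) : map2 R n := fun x y =>
  A *m Q x y - Q (A *m x) y - Q x (A *m y).
Definition DA3 (A : 'M[R]_n) (T : map3 R n) : map3 R n := fun x y z =>
  A *m T x y z - T (A *m x) y z - T x (A *m y) z - T x y (A *m z).

Lemma deriv (A : 'M[R]_n) (Q Q' : map2 R n) : is_sym2 Q -> is_sym2 Q' -> forall x y z,
  bracket (DA A Q) Q' x y z + bracket Q (DA A Q') x y z = DA3 A (bracket Q Q') x y z.
Proof.
move=> HQ HQ' x y z.
rewrite /bracket /DA /DA3.
rewrite ?(QBr HQ, QBr HQ', QDr HQ, QDr HQ').
rewrite ?(mulmxDr, mulmxBr, mulmxN).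
apply/matrixP => i j; rewrite !mxE.
Time ring.
Qed.

Lemma bracket_e (Q : map2 R n) : is_sym2 Q -> forall (x y a b c m : 'I_n),
  bracket Q (Qv (e y)) (e a) (e b) (e c) m 0 =
  S (fun m' (_ : 'I_n) a' b' => Q (e a') (e b') m' 0) m x y a b c.
Proof.
move=> HQ x y a b c m.
rewrite /bracket /Qv /S.
rewrite ?(QBr HQ, QDr HQ, QZr HQ).
rewrite !mxE !dot_ee !dot_el !dot_er !e_entry.
rewrite (QC HQ (e a) (e c)) (QC HQ (e b) (e a)) (QC HQ (e c) (e b)); ring.
Qed.

Lemma cond_of (T : 'I_n -> map2 R n) : (forall x, is_sym2 (T x)) ->
  (forall x y u v w, bracket (T x) (Qv (e y)) u v w = bracket (T y) (Qv (e x)) u v w) ->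
  Cond (fun m x a b => T x (e a) (e b) m 0).
Proof.
move=> HT H m x y a b c.
rewrite /= -[LHS](bracket_e (HT x) x) -[RHS](bracket_e (HT y) y).
by rewrite H.
Qed.

Lemma symt_of (T : 'I_n -> map2 R n) : (forall x, is_sym2 (T x)) ->
  Symt (fun m x a b => T x (e a) (e b) m 0).
Proof. by move=> HT m x a b; rewrite /= (QC (HT x)). Qed.

Definition Phi0 (A : 'M[R]_n) (v w : vec) : map2 R n := fun x y =>
  A *m Qv v x y - Qv v (A *m x) y - Qv v x (A *m y) + Qv w x y.

Lemma bracket_addl (P1 P2 Q' : map2 R n) : is_sym2 Q' -> forall x y z,
  bracket (fun a b => P1 a b + P2 a b) Q' x y z = bracket P1 Q' x y z + bracket P2 Q' x y z.
Proof.
move=> HQ' x y z; rewrite /bracket !(QDr HQ').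
apply/matrixP => i j; rewrite !mxE; ring.
Qed.

Lemma bracket_anti (P Q' : map2 R n) x y z : bracket P Q' x y z = - bracket Q' P x y z.
Proof. by rewrite /bracket opprB. Qed.

Lemma fwd (A : 'M[R]_n) (vi vj wi wj x y z : vec) :
  bracket (Phi0 A vi wi) (Qv vj) x y z = bracket (Phi0 A vj wj) (Qv vi) x y z.
Proof.
have E : forall v w v', bracket (Phi0 A v w) (Qv v') x y z = bracket (DA A (Qv v)) (Qv v') x y z.
  move=> v w v'; have := bracket_addl (DA A (Qv v)) (Qv w) (Qv_sym v') x y z.
  by rewrite QQ0 addr0 => <-.
rewrite !E.
have := deriv A (Qv_sym vi) (Qv_sym vj) x y z.
rewrite /DA3 !QQ0 mulmx0 !subr0 => h.
rewrite (bracket_anti (DA A (Qv vj))); apply/eqP; rewrite -addr_eq0; apply/eqP; exact: h.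
Qed.

Lemma LPhiE (B A' B' : 'M[R]_n) i x y : LPhi B A' B' i x y = Phi0 A' (col i B) (col i B') x y.
Proof. by rewrite /LPhi /postcomp /precomp !mul1mx. Qed.

Lemma Ae (A : 'M[R]_n) x : A *m e x = col x A.
Proof.
apply/matrixP => i j; rewrite (ord1 j) !mxE (bigD1 x) //= e_entry dll mulr1 big1 ?addr0 //.
by move=> k kx; rewrite e_entry /Scal.dl (negbTE kx) mulr0.
Qed.

Lemma phi_entries (A W : 'M[R]_n) m x a b :
  Phi0 A (e x) (col x W) (e a) (e b) m 0 = phi A W m x a b.
Proof.
rewrite /Phi0 /Qv /phi.
rewrite ?(mulmxDr, mulmxBr, mulmxN, =^~ scalemxAr) !Ae ?dot_el ?dot_er ?dot_ee !mxE ?e_entry.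
ring.
Qed.

Lemma Phi0_sym (A : 'M[R]_n) v w : is_sym2 (Phi0 A v w).
Proof.
split=> [x y|c x y z].
  rewrite /Phi0 /Qv ?(mulmxDr, mulmxBr, mulmxN, =^~ scalemxAr);
  push_dots; gen_dots; apply/matrixP => i j; rewrite !mxE; ring.
rewrite /Phi0 !(QDl (Qv_sym v)) !(QZl (Qv_sym v)) (QDl (Qv_sym w)) (QZl (Qv_sym w)).
rewrite (mulmxDr A (c *: x) y) -(scalemxAr c A x).
rewrite !(QDl (Qv_sym v)) !(QZl (Qv_sym v)).
move: (Qv v x z) (Qv v y z) (Qv v x (A *m z)) (Qv v y (A *m z)) (Qv w x z) (Qv w y z).
move: (Qv v (A *m x) z) (Qv v (A *m y) z) => X1 X2 X3 X4 X5 X6 X7 X8.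
rewrite mulmxDr -scalemxAr.
apply/matrixP => i j; rewrite !mxE; ring.
Qed.

Lemma vec_e (x : vec) : x = \sum_a x a 0 *: e a.
Proof.
apply/matrixP => i j; rewrite (ord1 j) summxE (bigD1 i) //= !mxE e_entry dll mulr1.
by rewrite big1 ?addr0 // => k ki; rewrite !mxE e_entry /Scal.dl eq_sym (negbTE ki) mulr0.
Qed.

Lemma Q_sumr (Q : map2 R n) (HQ : is_sym2 Q) (I : finType) (c : I -> R) (v : I -> vec) x :
  Q x (\sum_j c j *: v j) = \sum_j c j *: Q x (v j).
Proof.
apply: (big_ind2 (fun a b => Q x a = b)) => [|a1 b1 a2 b2 <- <-|j _].
- by rewrite (QC HQ) Q0l.
- exact: QDr.
- exact: QZr.
Qed.
Lemma Q_suml (Q : map2 R n) (HQ : is_sym2 Q) (I : finType) (c : I -> R) (v : I -> vec) x :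
  Q (\sum_j c j *: v j) x = \sum_j c j *: Q (v j) x.
Proof. by rewrite (QC HQ) Q_sumr //; apply: eq_bigr => j _; rewrite (QC HQ). Qed.

Lemma sym2_ext (Q1 Q2 : map2 R n) : is_sym2 Q1 -> is_sym2 Q2 ->
  (forall a b m, Q1 (e a) (e b) m 0 = Q2 (e a) (e b) m 0) -> forall x y, Q1 x y = Q2 x y.
Proof.
move=> H1 H2 H x y; rewrite (vec_e x) (vec_e y) !Q_suml //.
apply: eq_bigr => a _; rewrite !Q_sumr //; congr (_ *: _); apply: eq_bigr => b _.
congr (_ *: _); apply/matrixP => m j; rewrite (ord1 j); exact: H.
Qed.

Section Lin.
Variables (P Q' : 'I_n -> map2 R n) (c d : 'I_n -> R).
Hypotheses (HP : forall i, is_sym2 (P i)) (HQ : forall j, is_sym2 (Q' j)).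

Lemma dexp1 u X Y : \sum_i c i *: P i u (\sum_j d j *: Q' j X Y)
  = \sum_i \sum_j (c i * d j) *: P i u (Q' j X Y).
Proof.
apply: eq_bigr => i _; rewrite (Q_sumr (HP i)) scaler_sumr.
by apply: eq_bigr => j _; rewrite scalerA.
Qed.

Lemma dexp2 u X Y : \sum_j d j *: Q' j u (\sum_i c i *: P i X Y)
  = \sum_i \sum_j (c i * d j) *: Q' j u (P i X Y).
Proof.
rewrite exchange_big /=; apply: eq_bigr => j _; rewrite (Q_sumr (HQ j)) scaler_sumr.
by apply: eq_bigr => i _; rewrite scalerA mulrC.
Qed.

Lemma bracket_lin u v w :
  bracket (fun a b => \sum_i c i *: P i a b) (fun a b => \sum_j d j *: Q' j a b) u v w
  = \sum_i \sum_j (c i * d j) *: bracket (P i) (Q' j) u v w.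
Proof.
rewrite /bracket !dexp1 !dexp2.
rewrite -!big_split -sumrB; apply: eq_bigr => i _.
rewrite -!big_split -sumrB; apply: eq_bigr => j _.
by rewrite scalerBr !scalerDr.
Qed.
End Lin.

Lemma bracket_ext (P P' Q1 Q2 : map2 R n) : (forall a b, P a b = P' a b) ->
  (forall a b, Q1 a b = Q2 a b) -> forall u v w, bracket P Q1 u v w = bracket P' Q2 u v w.
Proof. by move=> H1 H2 u v w; rewrite /bracket !H1 !H2. Qed.

Lemma Phi0_lin (A : 'M[R]_n) (c : 'I_n -> R) (v w : 'I_n -> vec) u r :
  Phi0 A (\sum_x c x *: v x) (\sum_x c x *: w x) u r = \sum_x c x *: Phi0 A (v x) (w x) u r.
Proof.
rewrite /Phi0 !Qv_sum mulmx_sumr -!sumrB -big_split; apply: eq_bigr => x _ /=.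
rewrite -scalemxAr; move: (A *m Qv (v x) u r) (Qv (v x) (A *m u) r) (Qv (v x) u (A *m r)) (Qv (w x) u r) => a1 a2 a3 a4.
by rewrite scalerDr !scalerBr.
Qed.

Lemma e_expand (B : 'M[R]_n) : B \in unitmx -> forall y, e y = \sum_j invmx B j y *: col j B.
Proof.
move=> Bu y; apply/matrixP => i k; rewrite (ord1 k) summxE e_entry.
have := congr1 (fun M : 'M[R]_n => M i y) (mulmxV Bu).
rewrite /Scal.dl !mxE => <-; apply: eq_bigr => j _; by rewrite !mxE mulrC.
Qed.

Lemma col_expand (B : 'M[R]_n) i : col i B = \sum_x B x i *: e x.
Proof. by rewrite {1}(vec_e (col i B)); apply: eq_bigr => x _; rewrite mxE. Qed.

Lemma colWB_expand (W B : 'M[R]_n) i : col i (W *m B) = \sum_x B x i *: col x W.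
Proof.
apply/matrixP => m k; rewrite (ord1 k) summxE !mxE; apply: eq_bigr => x _.
by rewrite !mxE mulrC.
Qed.
End V.

Arguments e {R n}.

Lemma Cond_ext (R : realFieldType) n (t1 t2 : tens R n) :
  (forall m x a b, t1 m x a b = t2 m x a b) -> Cond t1 -> Cond t2.
Proof.
move=> H; have -> // : t1 = t2.
by do 4 (apply: functional_extensionality => ?).
Qed.


Unset Implicit Arguments. Set Strict Implicit.

Theorem proposition2p8 (R : realType) (n : nat) (B : 'M[R]_n) :
  (0 < n)%N -> B \in unitmx ->
  forall q : 'I_n -> map2 R n,
    (forall i, is_sym2 (q i)) ->
    ((forall i j : 'I_n, (i < j)%N -> LPsi B q i j = (fun _ _ _ => 0)) <->
     (exists A' B' : 'M[R]_n, LPhi B A' B' = q)).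
Proof.
move=> n0 Bu q Hq; split; last first.
  move=> [A [B' <-]] i j _.
  apply: functional_extensionality => u; apply: functional_extensionality => v.
  apply: functional_extensionality => w.
  rewrite /LPsi (bracket_ext (LPhiE B A B' i) (fun _ _ => erefl)).
  rewrite (bracket_ext (LPhiE B A B' j) (fun _ _ => erefl)).
  by rewrite (fwd A (col i B) (col j B) (col i B') (col j B')) subrr.
move=> H.
have Hall : forall (i j : 'I_n) (u v w : 'cV[R]_n), bracket (q i) (Qv (col j B)) u v w = bracket (q j) (Qv (col i B)) u v w.
  have H1 : forall (i j : 'I_n) (u v w : 'cV[R]_n), (i < j)%N -> bracket (q i) (Qv (col j B)) u v w = bracket (q j) (Qv (col i B)) u v w.
    move=> i j u v w ij; have := congr1 (fun f => f u v w) (H i j ij).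
    by rewrite /LPsi /= => /eqP; rewrite subr_eq0 => /eqP.
  move=> i j u v w; case: (ltngtP i j) => [ij|ji|/val_inj ->] //.
  - exact: H1.
  - by rewrite (H1 j i).
pose T (x : 'I_n) : map2 R n := fun a b => \sum_i invmx B i x *: q i a b.
have HT : forall x, is_sym2 (T x).
  move=> x; split=> [a b|c a b z]; rewrite /T.
    by apply: eq_bigr => i _; rewrite (QC (Hq i)).
  rewrite scaler_sumr -big_split; apply: eq_bigr => i _ /=.
  by rewrite (QDl (Hq i)) (QZl (Hq i)) scalerDr !scalerA mulrC.
have Hc : forall x y (u v w : 'cV[R]_n),
    bracket (T x) (Qv (e y)) u v w = bracket (T y) (Qv (e x)) u v w.
  have E : forall x y (u v w : 'cV[R]_n), bracket (T x) (Qv (e y)) u v w =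
      \sum_i \sum_j (invmx B i x * invmx B j y) *: bracket (q i) (Qv (col j B)) u v w.
    move=> x y u v w.
    rewrite (@bracket_ext _ _ (T x) (T x) _ (fun a b => \sum_j invmx B j y *: Qv (col j B) a b)) //.
    - exact: (bracket_lin _ _ Hq (fun j => Qv_sym _)).
    - by move=> a b; rewrite [e y](e_expand Bu y) Qv_sum.
  move=> x y u v w; rewrite !E exchange_big /=; apply: eq_bigr => a _; apply: eq_bigr => b _.
  by rewrite mulrC Hall.
have Hphi : forall A W : 'M[R]_n, Cond (phi A W).
  move=> A W; apply: (@Cond_ext _ _ (fun m x a b => Phi0 A (e x) (col x W) (e a) (e b) m 0)).
    by move=> *; exact: phi_entries.
  apply: (@cond_of R n (fun x => Phi0 A (e x) (col x W))) => [x|x y u v w]; [exact: Phi0_sym | exact: fwd].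
have [A [W HAW]] := construct n0 (symt_of HT) (cond_of HT Hc) Hphi.
exists A, (W *m B).
apply: functional_extensionality => i; apply: functional_extensionality => u.
apply: functional_extensionality => v.
rewrite LPhiE col_expand colWB_expand Phi0_lin.
have Tq : q i u v = \sum_x B x i *: T x u v.
  rewrite /T; symmetry; under eq_bigr do rewrite scaler_sumr.
  rewrite exchange_big /=.
  under eq_bigr do (under eq_bigr do rewrite scalerA; rewrite -scaler_suml).
  transitivity (\sum_k (1%:M : 'M[R]_n) k i *: q k u v).
    apply: eq_bigr => k _; congr (_ *: _); rewrite -(mulVmx Bu) mxE.
    by apply: eq_bigr => x _; rewrite mulrC.
  rewrite (bigD1 i) //= mxE eqxx scale1r big1 ?addr0 // => k ki.
  by rewrite mxE (negbTE ki) scale0r.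
rewrite Tq; apply: eq_bigr => x _; congr (_ *: _).
have Hb : forall a b m, Phi0 A (e x) (col x W) (e a) (e b) m 0 = T x (e a) (e b) m 0.
  by move=> a b m; rewrite phi_entries -HAW.
exact: (sym2_ext (Phi0_sym A (e x) (col x W)) (HT x) Hb u v).
Qed.
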